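(* Let $N\ge 2$ and $T\ge 1$, let $U$ be any unitary on the Hilbert space with orthonormal basis $\{|z;i\rangle: z,i\ge 0 \text{ integers}\}$, and let $S\subseteq\{0,1\}^N$ be the set of non-decreasing bit strings $x$ with $x_{N-1}=1$, with $f(x)=\min\{i: x_i=1\}$. For $x\in S$ and $j\ge 0$ let $|\psi_x^j\rangle=(UO_x)^jU|0\rangle$, where $O_x|z;i\rangle=(-1)^{x_i}|z;i\rangle$ for $0\le i<N$ and $O_x|z;i\rangle=|z;i\rangle$ for $i\ge N$. Define the weight $\omega(x,y)=\frac{1}{f(y)-f(x)}$ if $0\le f(x)<f(y)<N$ and $\omega(x,y)=0$ otherwise, and $$W_j=\sum_{x,y\in S}\omega(x,y)\,\langle\psi_x^j|\psi_y^j\rangle.$$ Then for every $j$ with $0\le j<T$, $|W_j-W_{j+1}|\le \pi N$. *)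

(* Defs.v *)
From HB Require Import structures.
From mathcomp Require Import all_boot all_order all_algebra.
From mathcomp Require Import all_classical all_reals.
From mathcomp Require Import topology normedtype sequences esum trigo.
From mathcomp Require Import complex.
Set Implicit Arguments. Unset Strict Implicit. Unset Printing Implicit Defensive.
Import Order.TTheory GRing.Theory Num.Theory.
Local Open Scope classical_set_scope.
Local Open Scope ring_scope.

(* Vectors of the Hilbert space l^2 with orthonormal basis |z;i>, z,i >= 0:
   coefficient functions (z,i) |-> amplitude; l2 v says square-summable. *)
Definition state (R : realType) := nat * nat -> R[i].

Definition sqmod (R : realType) (c : R[i]) : R := (complex.Re c) ^+ 2 + (complex.Im c) ^+ 2.

Definition normsq (R : realType) (v : state R) : \bar R :=
  (\esum_(p in [set: nat * nat]) (sqmod (v p))%:E)%E.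

Definition l2 (R : realType) (v : state R) : Prop := (normsq v < +oo)%E.

Definition sumR (R : realType) (g : nat * nat -> R) : R :=
  fine (\esum_(p in [set: nat * nat]) (Num.max (g p) 0)%:E)%E
  - fine (\esum_(p in [set: nat * nat]) (Num.max (- g p) 0)%:E)%E.

Definition inner (R : realType) (v w : state R) : R[i] :=
  Complex (sumR (fun p => complex.Re ((conjc (v p)) * w p)))
          (sumR (fun p => complex.Im ((conjc (v p)) * w p))).

Definition unitary (R : realType) (U : state R -> state R) : Prop :=
  [/\ (forall v, l2 v -> l2 (U v)),
      (forall (a : R[i]) v w, l2 v -> l2 w ->
          U (fun p => a * v p + w p) = (fun p => a * U v p + U w p)),
      (forall v, l2 v -> normsq (U v) = normsq v) &
      (forall w, l2 w -> exists v, l2 v /\ U v = w)].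

Definition ket0 (R : realType) : state R := fun p => if p == (0%N, 0%N) then 1 else 0.

Definition bit (N : nat) (x : {ffun 'I_N -> bool}) (i : nat) : bool :=
  if insub i is Some k then x k else false.

Definition oracle (R : realType) (N : nat) (x : {ffun 'I_N -> bool}) (v : state R) : state R :=
  fun p => if bit x p.2 then - v p else v p.

Definition psi (R : realType) (N : nat) (U : state R -> state R)
    (x : {ffun 'I_N -> bool}) (j : nat) : state R :=
  iter j (fun v => U (oracle x v)) (U (ket0 R)).

Definition inS (N : nat) (x : {ffun 'I_N -> bool}) : bool :=
  [forall i : 'I_N, forall k : 'I_N, (i <= k)%N ==> (x i ==> x k)]
  && [forall i : 'I_N, (i == N.-1 :> nat) ==> x i].

Definition f (N : nat) (x : {ffun 'I_N -> bool}) : nat :=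
  find (fun i : 'I_N => x i) (enum 'I_N).

Definition omega (R : realType) (N : nat) (x y : {ffun 'I_N -> bool}) : R :=
  if (f x < f y)%N && (f y < N)%N then ((f y - f x)%:R)^-1 else 0.

Definition W (R : realType) (N : nat) (U : state R -> state R) (j : nat) : R[i] :=
  \sum_(x : {ffun 'I_N -> bool} | inS x) \sum_(y : {ffun 'I_N -> bool} | inS y)
     (omega R x y)%:C%C * inner (psi U x j) (psi U y j).

(* Main.v *)
Require Import Defs.
From HB Require Import structures.
From mathcomp Require Import all_boot all_order all_algebra.
From mathcomp Require Import all_classical all_reals.
From mathcomp Require Import topology normedtype sequences esum trigo.
From mathcomp Require Import complex.
From mathcomp Require Import ereal derive realfun.
From mathcomp Require Import ring lra zify.
From Stdlib Require Import Lia.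
Set Implicit Arguments. Unset Strict Implicit. Unset Printing Implicit Defensive.
Import Order.TTheory GRing.Theory Num.Theory.
Import numFieldNormedType.Exports.
Local Open Scope classical_set_scope.
Local Open Scope ring_scope.
Section Tools.
Variable R : realType.
Implicit Types g h : nat * nat -> R.

Lemma esumZ (S : set (nat*nat)) (r : R) (a : nat * nat -> \bar R) :
  (0 <= r) -> (forall p, 0 <= a p)%E ->
  (\esum_(p in S) (r%:E * a p) = r%:E * \esum_(p in S) a p)%E.
Proof.
move=> r0 a0; rewrite /esum -ereal_supZl //; last first.
  by apply/set0P; exists 0%E; exists set0; [exact: fsets_set0| rewrite fsbig_set0].
congr ereal_sup; rewrite image_comp; apply: eq_imagel => A _ /=.
by rewrite ge0_mule_fsumr.
Qed.

Definition summ g := (\esum_(p in [set: nat*nat]) (`|g p|)%:E < +oo)%E.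
Definition Pp g := \esum_(p in [set: nat*nat]) (Num.max (g p) 0)%:E.
Definition Nn g := \esum_(p in [set: nat*nat]) (Num.max (- g p) 0)%:E.

Lemma sumRE g : sumR g = (fine (Pp g) - fine (Nn g))%R.
Proof. by []. Qed.

Lemma esum_ge0' (a : nat * nat -> R) : (forall p, 0 <= a p)%R ->
  (0 <= \esum_(p in [set: nat*nat]) (a p)%:E)%E.
Proof. by move=> a0; apply: esum_ge0 => p _; rewrite lee_fin. Qed.

Lemma esum_lt_le (a b : nat * nat -> R) : (forall p, 0 <= a p <= b p)%R ->
  (\esum_(p in [set: nat*nat]) (b p)%:E < +oo)%E ->
  (\esum_(p in [set: nat*nat]) (a p)%:E < +oo)%E.
Proof.
move=> ab; apply: le_lt_trans; apply: le_esum => p _.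
by rewrite lee_fin; case/andP: (ab p).
Qed.

Lemma esum_fineK (a : nat * nat -> R) : (forall p, 0 <= a p)%R ->
  (\esum_(p in [set: nat*nat]) (a p)%:E < +oo)%E ->
  (fine (\esum_(p in [set: nat*nat]) (a p)%:E))%:E = \esum_(p in [set: nat*nat]) (a p)%:E.
Proof. by move=> a0 lt; rewrite fineK// ge0_fin_numE// esum_ge0'. Qed.

Lemma maxx0_ge0 (x : R) : (0 <= Num.max x 0)%R.
Proof. by rewrite le_max lexx orbT. Qed.

Lemma maxx0_le (x : R) : (Num.max x 0 <= `|x|)%R.
Proof. by rewrite ge_max ler_norm normr_ge0. Qed.

Lemma maxx0N (x : R) : (Num.max x 0 - Num.max (- x) 0 = x)%R.
Proof.
by case: (lerP 0 x) => hx; case: (lerP 0 (-x)) => hx'; lra.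
Qed.

Lemma summ_Pp g : summ g -> (Pp g < +oo)%E.
Proof. move=> s; apply: esum_lt_le s => p; by rewrite maxx0_ge0 maxx0_le. Qed.
Lemma summ_Nn g : summ g -> (Nn g < +oo)%E.
Proof. move=> s; apply: esum_lt_le s => p; by rewrite maxx0_ge0 -normrN maxx0_le. Qed.

Lemma summ_le g h : (forall p, `|g p| <= h p)%R -> summ h -> summ g.
Proof.
move=> gh s; apply: esum_lt_le (s) => p; rewrite normr_ge0 /=.
by rewrite (le_trans (gh p)) // ler_norm.
Qed.

Lemma summD g h : summ g -> summ h -> summ (fun p => g p + h p)%R.
Proof.
move=> sg sh; rewrite /summ.
apply: (@esum_lt_le _ (fun p => `|g p| + `|h p|)%R).
  by move=> p; rewrite normr_ge0 ler_normD.
rewrite (eq_esum (fun p _ => EFinD _ _)) esumD; first exact: lte_add_pinfty.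
  by move=> p _; rewrite lee_fin.
by move=> p _; rewrite lee_fin.
Qed.

Lemma summZ (c : R) g : summ g -> summ (fun p => c * g p)%R.
Proof.
move=> sg; rewrite /summ.
rewrite (eq_esum (fun p _ => (congr1 _ (normrM c (g p))))).
rewrite (eq_esum (fun p _ => EFinM _ _)) esumZ //.
by apply: lte_mul_pinfty => //; rewrite lee_fin.
Qed.

Lemma summN g : summ g -> summ (fun p => - g p)%R.
Proof. by move=> s; rewrite /summ; under eq_esum do rewrite normrN. Qed.

Lemma sumR_D g h : summ g -> summ h -> sumR (fun p => g p + h p)%R = (sumR g + sumR h)%R.
Proof.
move=> sg sh; have sgh := summD sg sh.
have E : (Pp (fun p => g p + h p)%R + Nn g + Nn h = Nn (fun p => g p + h p)%R + Pp g + Pp h)%E.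
  rewrite /Pp /Nn -!esumD; try by move=> p _; rewrite lee_fin ?maxx0_ge0 ?addr_ge0 ?maxx0_ge0.
  apply: eq_esum => p _; rewrite -!EFinD; congr EFin.
  have := maxx0N (g p); have := maxx0N (h p); have := maxx0N (g p + h p)%R.
  lra.
move: E; rewrite -(fineK (_ : Pp (fun p => g p + h p)%R \is a fin_num)); last first.
  by rewrite ge0_fin_numE ?summ_Pp // esum_ge0' // => p; exact: maxx0_ge0.
rewrite -(fineK (_ : Pp g \is a fin_num)); last first.
  by rewrite ge0_fin_numE ?summ_Pp // esum_ge0' // => p; exact: maxx0_ge0.
rewrite -(fineK (_ : Pp h \is a fin_num)); last first.
  by rewrite ge0_fin_numE ?summ_Pp // esum_ge0' // => p; exact: maxx0_ge0.
rewrite -(fineK (_ : Nn (fun p => g p + h p)%R \is a fin_num)); last first.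
  by rewrite ge0_fin_numE ?summ_Nn // esum_ge0' // => p; exact: maxx0_ge0.
rewrite -(fineK (_ : Nn g \is a fin_num)); last first.
  by rewrite ge0_fin_numE ?summ_Nn // esum_ge0' // => p; exact: maxx0_ge0.
rewrite -(fineK (_ : Nn h \is a fin_num)); last first.
  by rewrite ge0_fin_numE ?summ_Nn // esum_ge0' // => p; exact: maxx0_ge0.
rewrite -!EFinD => E2; have E3 := EFin_inj E2; rewrite !sumRE; lra.
Qed.

Lemma sumR_N g : sumR (fun p => - g p)%R = (- sumR g)%R.
Proof.
have e : Nn (fun p => - g p)%R = Pp g by apply: eq_esum => p _; rewrite opprK.
rewrite !sumRE e /Pp /Nn; lra.
Qed.

Lemma sumR_Zp (c : R) g : (0 <= c)%R -> summ g -> sumR (fun p => c * g p)%R = (c * sumR g)%R.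
Proof.
move=> c0 sg; rewrite !sumRE /Pp /Nn.
have e1 : forall x : R, Num.max (c * x) 0 = c * Num.max x 0.
  by move=> x; rewrite maxr_pMr // mulr0.
under eq_esum do rewrite e1 EFinM.
under [X in (_ - fine X)%R]eq_esum do rewrite -mulrN e1 EFinM.
rewrite !esumZ; try by move=> p; rewrite lee_fin maxx0_ge0.
rewrite !fineM //= ?mulrBr // ge0_fin_numE ?esum_ge0' //;
  try (by move=> p; exact: maxx0_ge0).
  exact: (summ_Nn sg).
exact: (summ_Pp sg).
all: by [].

Qed.

Lemma sumR_Z (c : R) g : summ g -> sumR (fun p => c * g p)%R = (c * sumR g)%R.
Proof.
move=> sg; case: (lerP 0 c) => c0; first exact: sumR_Zp.
have -> : (fun p => c * g p) = (fun p => - ((- c) * g p))%R.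
  by apply/funext => p; rewrite mulNr opprK.
by rewrite sumR_N sumR_Zp ?oppr_ge0 ?ltW // mulNr opprK.
Qed.

Lemma sumR_B g h : summ g -> summ h -> sumR (fun p => g p - h p)%R = (sumR g - sumR h)%R.
Proof. by move=> sg sh; rewrite sumR_D ?sumR_N //; exact: summN. Qed.

Lemma esum0' : (\esum_(p in [set: nat*nat]) (0:R)%:E = 0)%E.
Proof. by apply: esum1. Qed.

Lemma sumR_nneg g : (forall p, 0 <= g p)%R ->
  sumR g = fine (\esum_(p in [set: nat*nat]) (g p)%:E).
Proof.
move=> g0; rewrite sumRE /Pp /Nn.
have -> : (\esum_(p in [set: nat*nat]) (Num.max (- g p) 0)%:E = 0)%E.
  apply: esum1 => p _; congr EFin; have := g0 p.
  by case: (lerP 0 (- g p)) => h; lra.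
rewrite subr0; congr fine; apply: eq_esum => p _; congr EFin.
by have := g0 p; case: (lerP 0 (g p)) => h; lra.
Qed.

Lemma sumR_ge0 g : (forall p, 0 <= g p)%R -> (0 <= sumR g)%R.
Proof.
move=> g0; rewrite sumR_nneg //; apply: fine_ge0; exact: esum_ge0'.
Qed.

Lemma sumR_le g h : summ g -> summ h -> (forall p, g p <= h p)%R -> (sumR g <= sumR h)%R.
Proof.
move=> sg sh gh; rewrite -subr_ge0 -sumR_B //; apply: sumR_ge0 => p.
by rewrite subr_ge0.
Qed.

Lemma summ0 : summ (fun _ => 0%R).
Proof.
rewrite /summ; rewrite (_ : (\esum_(p in [set: nat*nat]) (`|0:R|)%:E = 0)%E) //.
by apply: esum1 => p _; rewrite normr0.
Qed.

Lemma summ_sum (I : Type) (r : seq I) (P : pred I) (F : I -> nat * nat -> R) :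
  (forall i, P i -> summ (F i)) -> summ (fun p => \sum_(i <- r | P i) F i p)%R.
Proof.
move=> sF; elim: r => [|a r IH].
  by under [X in summ X]funext do rewrite big_nil; exact: summ0.
under [X in summ X]funext do rewrite big_cons.
case: (boolP (P a)) => Pa; last by [].
exact: summD (sF _ Pa) IH.
Qed.

Lemma sumR_sum (I : Type) (r : seq I) (P : pred I) (F : I -> nat * nat -> R) :
  (forall i, P i -> summ (F i)) ->
  sumR (fun p => \sum_(i <- r | P i) F i p)%R = (\sum_(i <- r | P i) sumR (F i))%R.
Proof.
move=> sF; elim: r => [|a r IH].
  under [X in sumR X]funext do rewrite big_nil.
  by rewrite big_nil sumR_nneg // esum0'.
under [X in sumR X]funext do rewrite big_cons.
rewrite big_cons; case: (boolP (P a)) => Pa; last by [].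
by rewrite sumR_D ?IH //; [exact: sF | exact: summ_sum].
Qed.
End Tools.

Section Cplx.
Variable R : realType.
Implicit Types a b z : R[i].

Definition nrm z : R := Num.sqrt (sqmod z).

Lemma normE z : `|z| = (nrm z)%:C%C.
Proof. by case: z. Qed.

Lemma sqmod_ge0 z : 0 <= sqmod z.
Proof. by rewrite /sqmod addr_ge0 // sqr_ge0. Qed.

Lemma nrm_ge0 z : 0 <= nrm z.
Proof. exact: sqrtr_ge0. Qed.

Lemma nrm_sqr z : nrm z ^+ 2 = sqmod z.
Proof. by rewrite sqr_sqrtr // sqmod_ge0. Qed.

Lemma nrmD a b : nrm (a + b) <= nrm a + nrm b.
Proof. by have := ler_normD a b; rewrite !normE -rmorphD lecR. Qed.

Lemma nrmM a b : nrm (a * b) = nrm a * nrm b.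
Proof. by have := normrM a b; rewrite !normE -rmorphM => /complexI. Qed.

Lemma nrm_conj a : nrm (conjc a) = nrm a.
Proof. by case: a => a1 a2; rewrite /nrm /sqmod /= sqrrN. Qed.

Lemma nrmN a : nrm (- a) = nrm a.
Proof. by case: a => a1 a2; rewrite /nrm /sqmod /= !sqrrN. Qed.

Lemma nrm_real (r : R) : nrm (r%:C%C) = `|r|.
Proof. by rewrite /nrm /sqmod /= expr0n /= addr0 sqrtr_sqr. Qed.

Lemma Re_le a : `|complex.Re a| <= nrm a.
Proof.
case: a => a1 a2; rewrite /nrm /sqmod /= -sqrtr_sqr ler_sqrt ?lerDl ?sqr_ge0 //.
by rewrite addr_ge0 // sqr_ge0.
Qed.

Lemma Im_le a : `|complex.Im a| <= nrm a.
Proof.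
case: a => a1 a2; rewrite /nrm /sqmod /= -sqrtr_sqr ler_sqrt ?lerDr ?sqr_ge0 //.
by rewrite addr_ge0 // sqr_ge0.
Qed.

Lemma nrm_sum (I : Type) (r : seq I) (P : pred I) (F : I -> R[i]) :
  nrm (\sum_(i <- r | P i) F i) <= \sum_(i <- r | P i) nrm (F i).
Proof.
elim: r => [|x r IH]; first by rewrite !big_nil /nrm /sqmod /= expr0n /= addr0 sqrtr0.
rewrite !big_cons; case: (P x) => //.
exact: le_trans (nrmD _ _) (lerD (lexx _) IH).
Qed.

Lemma cadd (a b c d : R) : (a +i* b)%C + (c +i* d)%C = ((a + c) +i* (b + d))%C.
Proof. by []. Qed.
Lemma cneg (a b : R) : - (a +i* b)%C = ((- a) +i* (- b))%C.
Proof. by []. Qed.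
Lemma cmulR (r a b : R) : r%:C%C * (a +i* b)%C = ((r * a) +i* (r * b))%C.
Proof. by apply/eqP; rewrite eq_complex /= !mul0r subr0 addr0 !eqxx. Qed.

Definition csum (h : nat * nat -> R[i]) : R[i] :=
  Complex (sumR (fun p => complex.Re (h p))) (sumR (fun p => complex.Im (h p))).

Definition csumm (h : nat * nat -> R[i]) := summ (fun p => nrm (h p)).

Lemma csumm_Re h : csumm h -> summ (fun p => complex.Re (h p)).
Proof. by move=> s; apply: summ_le s => p; exact: Re_le. Qed.
Lemma csumm_Im h : csumm h -> summ (fun p => complex.Im (h p)).
Proof. by move=> s; apply: summ_le s => p; exact: Im_le. Qed.

Lemma csummD h1 h2 : csumm h1 -> csumm h2 -> csumm (fun p => h1 p + h2 p).
Proof.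
move=> s1 s2; apply: (summ_le (h := fun p => nrm (h1 p) + nrm (h2 p))); last exact: summD.
by move=> p; rewrite ger0_norm ?nrm_ge0 // nrmD.
Qed.

Lemma csummN h : csumm h -> csumm (fun p => - h p).
Proof. by move=> s; rewrite /csumm; under eq_fun do rewrite nrmN. Qed.

Lemma csummZ (r : R) h : csumm h -> csumm (fun p => r%:C%C * h p).
Proof.
move=> s; rewrite /csumm; under eq_fun do rewrite nrmM nrm_real.
exact: summZ.
Qed.

Lemma csumm_sum (I : Type) (r : seq I) (P : pred I) (F : I -> nat * nat -> R[i]) :
  (forall i, P i -> csumm (F i)) -> csumm (fun p => \sum_(i <- r | P i) F i p).
Proof.
move=> sF; apply: (summ_le (h := fun p => \sum_(i <- r | P i) nrm (F i p))).
  by move=> p; rewrite ger0_norm ?nrm_ge0 // nrm_sum.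
exact: summ_sum.
Qed.

Lemma csumD h1 h2 : csumm h1 -> csumm h2 -> csum (fun p => h1 p + h2 p) = csum h1 + csum h2.
Proof.
move=> s1 s2; rewrite /csum.
have e1 : (fun p => complex.Re (h1 p + h2 p)) = (fun p => complex.Re (h1 p) + complex.Re (h2 p)).
  by apply/funext => p; case: (h1 p); case: (h2 p).
have e2 : (fun p => complex.Im (h1 p + h2 p)) = (fun p => complex.Im (h1 p) + complex.Im (h2 p)).
  by apply/funext => p; case: (h1 p); case: (h2 p).
rewrite e1 e2 (sumR_D (csumm_Re s1) (csumm_Re s2)) (sumR_D (csumm_Im s1) (csumm_Im s2)).
by rewrite cadd.
Qed.

Lemma csumN h : csum (fun p => - h p) = - csum h.
Proof.
rewrite /csum.
have e1 : (fun p => complex.Re (- h p)) = (fun p => - complex.Re (h p)).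
  by apply/funext => p; case: (h p).
have e2 : (fun p => complex.Im (- h p)) = (fun p => - complex.Im (h p)).
  by apply/funext => p; case: (h p).
by rewrite e1 e2 !sumR_N cneg.
Qed.

Lemma csumB h1 h2 : csumm h1 -> csumm h2 -> csum (fun p => h1 p - h2 p) = csum h1 - csum h2.
Proof. by move=> s1 s2; rewrite csumD ?csumN //; exact: csummN. Qed.

Lemma csumZ (r : R) h : csumm h -> csum (fun p => r%:C%C * h p) = r%:C%C * csum h.
Proof.
move=> s; rewrite /csum.
have e1 : (fun p => complex.Re (r%:C%C * h p)) = (fun p => r * complex.Re (h p)).
  by apply/funext => p; case: (h p) => a b /=; rewrite mul0r subr0.
have e2 : (fun p => complex.Im (r%:C%C * h p)) = (fun p => r * complex.Im (h p)).
  by apply/funext => p; case: (h p) => a b /=; rewrite mul0r addr0.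
by rewrite e1 e2 (sumR_Z _ (csumm_Re s)) (sumR_Z _ (csumm_Im s)) cmulR.
Qed.

Lemma csum_sum (I : Type) (r : seq I) (P : pred I) (F : I -> nat * nat -> R[i]) :
  (forall i, P i -> csumm (F i)) ->
  csum (fun p => \sum_(i <- r | P i) F i p) = \sum_(i <- r | P i) csum (F i).
Proof.
move=> sF; elim: r => [|a r IH].
  under [X in csum X]funext do rewrite big_nil.
  rewrite big_nil /csum.
  rewrite !sumR_nneg; try by move=> p.
  by rewrite esum0'.
under [X in csum X]funext do rewrite big_cons.
rewrite big_cons; case: (boolP (P a)) => Pa; last by [].
by rewrite (csumD (sF _ Pa) (csumm_sum r sF)) IH.
Qed.

Lemma csum_norm h : csumm h -> `|csum h| <= (sumR (fun p => nrm (h p)))%:C%C.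
Proof.
move=> s; rewrite normE lecR.
set A := sumR (fun p => complex.Re (h p)); set B := sumR (fun p => complex.Im (h p)).
set M := sumR (fun p => nrm (h p)).
have -> : nrm (csum h) = Num.sqrt (A ^+ 2 + B ^+ 2) by [].
set r := Num.sqrt (A ^+ 2 + B ^+ 2).
have r0 : 0 <= r by exact: sqrtr_ge0.
have r2 : r ^+ 2 = A ^+ 2 + B ^+ 2 by rewrite sqr_sqrtr // addr_ge0 // sqr_ge0.
have M0 : 0 <= M by apply: sumR_ge0 => p; exact: nrm_ge0.
have sR := csumm_Re s; have sI := csumm_Im s.
have e : A ^+ 2 + B ^+ 2 = sumR (fun p => A * complex.Re (h p) + B * complex.Im (h p)).
  by rewrite sumR_D ?sumR_Z //; [exact: summZ | exact: summZ].
have le : sumR (fun p => A * complex.Re (h p) + B * complex.Im (h p)) <= sumR (fun p => r * nrm (h p)).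
  apply: sumR_le; [exact: summD (summZ _ sR) (summZ _ sI) | exact: summZ | ].
  move=> p; case: (h p) => a b.
  rewrite /nrm /sqmod /=.
  set t := Num.sqrt (a ^+ 2 + b ^+ 2).
  have t0 : 0 <= t by exact: sqrtr_ge0.
  have t2 : t ^+ 2 = a ^+ 2 + b ^+ 2 by rewrite sqr_sqrtr // addr_ge0 // sqr_ge0.
  have : (A * a + B * b) ^+ 2 <= (r * t) ^+ 2.
    rewrite exprMn r2 t2; have := sqr_ge0 (A * b - B * a); nra.
  have := mulr_ge0 r0 t0; nra.
rewrite sumR_Z // -/M in le.
nra.
Qed.
End Cplx.

Section Hilb.
Variable R : realType.
Implicit Types v w : state R.

Lemma summ_nneg (g : nat * nat -> R) : (forall p, 0 <= g p) ->
  summ g <-> (\esum_(p in [set: nat*nat]) (g p)%:E < +oo)%E.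
Proof.
move=> g0; rewrite /summ.
by rewrite (eq_esum (fun p _ => congr1 EFin (ger0_norm (g0 p)))).
Qed.

Lemma l2_summ v : l2 v <-> summ (fun p => sqmod (v p)).
Proof. by rewrite summ_nneg //; move=> p; exact: sqmod_ge0. Qed.

Lemma sumR_sqmod v : sumR (fun p => sqmod (v p)) = fine (normsq v).
Proof. by rewrite sumR_nneg //; move=> p; exact: sqmod_ge0. Qed.

Lemma nrm_inner_le (a b : R[i]) : nrm (conjc a * b) <= sqmod a + sqmod b.
Proof.
rewrite nrmM nrm_conj -!nrm_sqr.
have := nrm_ge0 a; have := nrm_ge0 b; have := sqr_ge0 (nrm a - nrm b); nra.
Qed.

Lemma csumm_inner v w : l2 v -> l2 w -> csumm (fun p => conjc (v p) * w p).
Proof.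
move=> /l2_summ sv /l2_summ sw.
apply: (summ_le (h := fun p => sqmod (v p) + sqmod (w p))); last exact: summD.
by move=> p; rewrite ger0_norm ?nrm_ge0 // nrm_inner_le.
Qed.

Lemma sqm (a v w : R[i]) : sqmod (a * v + w) =
  sqmod a * sqmod v + sqmod w + 2 * complex.Re (conjc a * (conjc v * w)).
Proof.
case: a => a1 a2; case: v => v1 v2; case: w => w1 w2; rewrite /sqmod /=. ring.
Qed.

Lemma Re_conj_le (a z : R[i]) : sqmod a = 1 -> `|complex.Re (conjc a * z)| <= nrm z.
Proof.
move=> a1; apply: le_trans (Re_le _) _.
by rewrite nrmM nrm_conj /nrm a1 sqrtr1 mul1r.
Qed.

Lemma l2_comb (a : R[i]) v w : sqmod a = 1 -> l2 v -> l2 w -> l2 (fun p => a * v p + w p).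
Proof.
move=> a1 lv lw; have cs := csumm_inner lv lw.
move/l2_summ: lv => sv; move/l2_summ: lw => sw.
apply/l2_summ.
apply: (summ_le (h := fun p => sqmod (v p) + sqmod (w p) + 2 * nrm (conjc (v p) * w p))).
  move=> p; rewrite ger0_norm ?sqmod_ge0 // sqm a1 mul1r.
  have := Re_conj_le (conjc (v p) * w p) a1; rewrite ler_norml => /andP[_ h].
  lra.
exact: summD (summD sv sw) (summZ _ cs).
Qed.

Lemma polar (a : R[i]) v w : sqmod a = 1 -> l2 v -> l2 w ->
  2 * sumR (fun p => complex.Re (conjc a * (conjc (v p) * w p)))
  = fine (normsq (fun p => a * v p + w p)) - fine (normsq v) - fine (normsq w).
Proof.
move=> a1 lv lw; have cs := csumm_inner lv lw.
have sr : summ (fun p => complex.Re (conjc a * (conjc (v p) * w p))).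
  by apply: summ_le cs => p; exact: Re_conj_le.
move/l2_summ: (lv) => sv; move/l2_summ: (lw) => sw.
rewrite -!sumR_sqmod.
have -> : (fun p => sqmod (a * v p + w p)) = (fun p => sqmod (v p) + sqmod (w p)
    + 2 * complex.Re (conjc a * (conjc (v p) * w p))).
  by apply/funext => p; rewrite sqm a1 mul1r.
rewrite (sumR_D (summD sv sw) (summZ _ sr)) (sumR_D sv sw) (sumR_Z _ sr).
lra.
Qed.

Lemma conj1 : conjc (1 : R[i]) = 1.
Proof. by apply/eqP; rewrite eq_complex /= oppr0 !eqxx. Qed.

Lemma Re_conji (z : R[i]) : complex.Re (conjc 'i%C * z) = complex.Im z.
Proof. by case: z => a b /=; ring. Qed.

Lemma sqmod1 : sqmod (1 : R[i]) = 1.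
Proof. by rewrite /sqmod /= expr1n expr0n /= addr0. Qed.
Lemma sqmodi : sqmod ('i%C : R[i]) = 1.
Proof. by rewrite /sqmod /= expr1n expr0n /= add0r. Qed.

Lemma inner_U (U : state R -> state R) v w : unitary U -> l2 v -> l2 w ->
  inner (U v) (U w) = inner v w.
Proof.
case=> hl2 hlin hnorm honto lv lw.
have key a : sqmod a = 1 ->
    sumR (fun p => complex.Re (conjc a * (conjc (U v p) * U w p)))
  = sumR (fun p => complex.Re (conjc a * (conjc (v p) * w p))).
  move=> a1.
  have e1 := polar a1 (hl2 _ lv) (hl2 _ lw).
  have e2 := polar a1 lv lw.
  rewrite -(hlin a v w lv lw) in e1.
  rewrite (hnorm _ (l2_comb a1 lv lw)) (hnorm _ lv) (hnorm _ lw) -e2 in e1.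
  lra.
have kRe := key 1 sqmod1; have kIm := key _ sqmodi.
rewrite /inner; congr Complex.
  move: kRe; rewrite conj1.
  by under eq_fun do rewrite mul1r; under [in X in _ = X -> _]eq_fun do rewrite mul1r.
move: kIm.
by under eq_fun do rewrite Re_conji; under [in X in _ = X -> _]eq_fun do rewrite Re_conji.
Qed.
End Hilb.

Section Analytic.
Variable R : realType.

Definition phi (s : R) : R := atan (Num.sqrt s).
Definition dphi (s : R) : R := ((1 + s) * (2 * Num.sqrt s))^-1.

Lemma is_derive_phi (s : R) : 0 < s -> is_derive s 1 phi (dphi s).
Proof.
move=> s0.
have h1 := is_derive1_sqrt s0.
have h2 := is_derive1_atan (Num.sqrt s).
have := is_derive1_comp h2 h1.
rewrite sqr_sqrtr ?ltW // => h.
apply: is_derive_eq h _.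
by rewrite /dphi [in RHS]invfM.
Qed.

Lemma continuous_phi : continuous phi.
Proof.
move=> s; apply: (@continuous_comp _ _ _ (@Num.sqrt R) (@atan R)).
  exact: sqrt_continuous.
exact: continuous_atan.
Qed.


Lemma inv_sum_le (x y z : R) : 0 < x -> 0 < y -> 0 < z ->
  x * y <= z * (x + y) -> z^-1 <= x^-1 + y^-1.
Proof.
move=> x0 y0 z0 h.
rewrite -subr_ge0.
have -> : x^-1 + y^-1 - z^-1 = (z * (x + y) - x * y) / (x * y * z).
  by field; rewrite !gt_eqF.
by apply: divr_ge0; [rewrite subr_ge0 | rewrite !mulr_ge0 // ltW].
Qed.

Lemma key_poly (A B r : R) : 0 < A -> 0 < B -> 0 < r ->
  A ^+ 2 + B ^+ 2 = 2 * r ^+ 2 ->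
  2 * (1 + A^+2) * (1 + B^+2) * A * B <=
  ((1 + A^+2) + (1 + B^+2)) / 2 * r * ((1 + A^+2) * A + (1 + B^+2) * B).
Proof.
move=> A0 B0 r0 e.
set P := 1 + A^+2; set Q := 1 + B^+2.
have hr2 : A * B <= r ^+ 2 by have := sqr_ge0 (A - B); nra.
have hAB : 4 * (A * B) <= (A + B) ^+ 2 by have := sqr_ge0 (A - B); nra.
have sq : (2 * A * B) ^+ 2 <= (r * (A + B)) ^+ 2.
  have : (A * B) * (4 * (A * B)) <= r ^+ 2 * (A + B) ^+ 2.
    apply: ler_pM => //; nra.
  nra.
have h1 : 2 * A * B <= r * (A + B).
  have p1 : 0 <= 2 * A * B by nra.
  have p2 : 0 <= r * (A + B) by nra.
  nra.
have cheb : 0 <= (P - Q) * (A - B) by rewrite /P /Q; nra.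
have s1 : (P + Q) * (A + B) / 2 <= P * A + Q * B by nra.
have pq : 0 <= (P + Q) / 2 by rewrite /P /Q; nra.
have s2 : (P + Q) / 2 * r * ((P + Q) * (A + B) / 2) <= (P + Q) / 2 * r * (P * A + Q * B).
  by apply: ler_wpM2l => //; nra.
have s3 : ((P + Q) / 2) ^+ 2 * (2 * A * B) <= ((P + Q) / 2) ^+ 2 * (r * (A + B)).
  by apply: ler_wpM2l => //; nra.
have s4 : P * Q * (2 * A * B) <= ((P + Q) / 2) ^+ 2 * (2 * A * B).
  apply: ler_wpM2r; first nra.
  have := sqr_ge0 (P - Q); nra.
nra.
Qed.

Lemma dphi_convex (m d : R) : 0 < d -> d < m -> 2 * dphi m <= dphi (m + d) + dphi (m - d).
Proof.
move=> d0 dm.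
have m0 : 0 < m by lra.
set A := Num.sqrt (m + d); set B := Num.sqrt (m - d); set r := Num.sqrt m.
have A0 : 0 < A by rewrite sqrtr_gt0; lra.
have B0 : 0 < B by rewrite sqrtr_gt0; lra.
have r0 : 0 < r by rewrite sqrtr_gt0.
have eA : A ^+ 2 = m + d by rewrite sqr_sqrtr //; lra.
have eB : B ^+ 2 = m - d by rewrite sqr_sqrtr //; lra.
have er : r ^+ 2 = m by rewrite sqr_sqrtr //; lra.
have := key_poly A0 B0 r0 (ltac:(rewrite eA eB er; lra)).
rewrite eA eB => kp.
rewrite /dphi -/A -/B -/r.
have -> : 2 * ((1 + m) * (2 * r))^-1 = ((1 + m) * r)^-1.
  by field; rewrite gt_eqF //; nra.
apply: inv_sum_le; nra.
Qed.

Lemma H_derive (m k t : R) : 0 < t < m ->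
  is_derive t 1 (fun t => phi (m + t) - phi (m - t) - k * t)
    (dphi (m + t) + dphi (m - t) - k).
Proof.
case/andP=> t0 tm.
have e1 : is_derive t 1 (fun t => m + t) 1.
  have h := (is_deriveD (is_derive_cst m t 1) (is_derive_id t 1)).
  by rewrite add0r in h.
have e2 : is_derive t 1 (fun t => m - t) (-1).
  have h := (is_deriveB (is_derive_cst m t 1) (is_derive_id t 1)).
  by rewrite sub0r in h.
have c1 := @is_derive1_comp R phi (fun t => m + t) t _ _ (is_derive_phi (_ : 0 < m + t)) e1.
have c2 := @is_derive1_comp R phi (fun t => m - t) t _ _ (is_derive_phi (_ : 0 < m - t)) e2.
have e3 : is_derive t 1 (fun t => k * t) k.
  have h := (is_deriveZ k (is_derive_id t 1)).
  rewrite [X in is_derive _ _ _ X]/GRing.scale /= mulr1 in h.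
  exact h.
have h := is_deriveB (is_deriveB (c1 ltac:(lra)) (c2 ltac:(lra))) e3.
rewrite mulr1 mulrN1 opprK in h.
exact h.
Qed.

Lemma deriv_cont (f : R -> R) (x d : R) : is_derive x 1 f d -> {for x, continuous f}.
Proof. by case=> df _; apply/differentiable_continuous/derivable1_diffP. Qed.

Lemma H_cont (m k : R) : continuous (fun t => phi (m + t) - phi (m - t) - k * t).
Proof.
move=> x.
have e1 : is_derive x 1 (fun t => m + t) 1.
  have h := (is_deriveD (is_derive_cst m x 1) (is_derive_id x 1)).
  by rewrite add0r in h.
have e2 : is_derive x 1 (fun t => m - t) (-1).
  have h := (is_deriveB (is_derive_cst m x 1) (is_derive_id x 1)).
  by rewrite sub0r in h.
have e3 : is_derive x 1 (fun t => k * t) k.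
  have h := (is_deriveZ k (is_derive_id x 1)).
  rewrite [X in is_derive _ _ _ X]/GRing.scale /= mulr1 in h.
  exact h.
have c1 : {for x, continuous (phi \o (fun t => m + t))}.
  apply: (@continuous_comp _ _ _ (fun t => m + t) phi); first exact: deriv_cont e1.
  exact: continuous_phi.
have c2 : {for x, continuous (phi \o (fun t => m - t))}.
  apply: (@continuous_comp _ _ _ (fun t => m - t) phi); first exact: deriv_cont e2.
  exact: continuous_phi.
exact: (continuousB (continuousB c1 c2) (deriv_cont e3)).
Qed.

Lemma phi_gap (m d : R) : 0 < m -> 0 <= d <= m ->
  d * (2 * dphi m) <= phi (m + d) - phi (m - d).
Proof.
move=> m0 /andP[d0 dm].
set H := (fun t => phi (m + t) - phi (m - t) - (2 * dphi m) * t).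
have : H 0 <= H d.
  apply: (@ger0_derive1_le_cc R H 0 m).
  - move=> x; rewrite in_itv /= => hx.
    by case: (H_derive (2 * dphi m) hx).
  - move=> x; rewrite in_itv /= => hx.
    rewrite derive1E; case: (H_derive (2 * dphi m) hx) => _ ->; rewrite subr_ge0.
    case/andP: hx => x0 xm; exact: dphi_convex.
  - apply: continuous_subspaceT => x; exact (@H_cont m (2 * dphi m) x).
  - by rewrite in_itv /= lexx ltW.
  - by rewrite in_itv /= d0 dm.
  - exact: d0.
rewrite /H addr0 subr0 mulr0 subrr subr0.
lra.
Qed.

Definition rterm (c a : R) : R := ((c + a) * Num.sqrt (a / c))^-1.

Lemma rterm_le (c : R) (n : nat) : 0 < c ->
  rterm c (n%:R + 2^-1) <= 2 * (phi (n.+1%:R / c) - phi (n%:R / c)).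
Proof.
move=> c0.
set a := n%:R + 2^-1.
have a0 : 0 < a by rewrite /a; have := ler0n R n; lra.
set m := a / c.
have m0 : 0 < m by rewrite /m divr_gt0.
have sm0 : 0 < Num.sqrt m by rewrite sqrtr_gt0.
have dm : 0 <= (2 * c)^-1 <= m.
  apply/andP; split; first by rewrite invr_ge0 mulr_ge0 // ltW.
  rewrite -subr_ge0 (_ : m - _ = n%:R / c); first by rewrite divr_ge0 // ltW.
  by rewrite /m /a; field; rewrite gt_eqF.
have := phi_gap m0 dm.
have -> : m + (2 * c)^-1 = n.+1%:R / c.
  by rewrite /m /a -natr1; field; rewrite gt_eqF.
have -> : m - (2 * c)^-1 = n%:R / c.
  by rewrite /m /a; field; rewrite gt_eqF.
move=> h.
suff -> : rterm c a = 2 * ((2 * c)^-1 * (2 * dphi m)) by lra.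
rewrite /rterm /dphi -/m.
move: sm0; set s := Num.sqrt m => sm0.
rewrite /m; field.
by rewrite !gt_eqF //; nra.
Qed.

Lemma row_bound (c : R) (K : nat) : 0 < c ->
  \sum_(n < K) rterm c (n%:R + 2^-1) <= pi.
Proof.
move=> c0.
apply: (le_trans (ler_sum _ (fun (n : 'I_K) _ => rterm_le n c0))).
rewrite -mulr_sumr -(big_mkord xpredT (fun n => phi (n.+1%:R / c) - phi (n%:R / c))).
rewrite telescope_sumr // mul0r /phi sqrtr0 atan0 subr0.
have := atan_ltpi2 (Num.sqrt (K%:R / c)); lra.
Qed.
End Analytic.

Section Schur.
Variable R : realType.

Lemma reindex_le (T : finType) (P : pred T) (h : T -> nat) (K : nat) (F : nat -> R) :
  {in P &, injective h} -> (forall x, P x -> h x <= K)%N -> (forall n, 0 <= F n) ->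
  \sum_(x | P x) F (h x) <= \sum_(n < K.+1) F n.
Proof.
move=> hi hK p0.
have e : \sum_(x | P x) F (h x) = \sum_(x in P) F (@inord K (h x)).
  by apply: eq_bigr => x Px; rewrite inordK // ltnS hK.
rewrite e -(big_imset (fun j : 'I_K.+1 => F j)); last first.
  move=> x y Px Py /(congr1 (@nat_of_ord _)); rewrite !inordK ?ltnS ?hK //; exact: hi.
rewrite [X in _ <= X](bigID (fun j => j \in (fun x => @inord K (h x)) @: P)) /= lerDl.
by apply: sumr_ge0 => j _.
Qed.

Lemma rterm_ge0 (c a : R) : 0 < c -> 0 < a -> 0 <= rterm c a.
Proof.
move=> c0 a0; rewrite /rterm invr_ge0 mulr_ge0 // ?sqrtr_ge0 //; lra.
Qed.

Lemma amgm_rterm (A B u v : R) : 0 < A -> 0 < B ->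
  2 * u * v / (A + B) <= u ^+ 2 * rterm A B + v ^+ 2 * rterm B A.
Proof.
move=> A0 B0.
have s0 : 0 < Num.sqrt (B / A) by rewrite sqrtr_gt0 divr_gt0.
have e : Num.sqrt (A / B) = (Num.sqrt (B / A))^-1.
  by rewrite -sqrtrV ?invf_div // ltW // divr_gt0.
rewrite /rterm e; move: s0; set s := Num.sqrt (B / A) => s0.
rewrite -subr_ge0.
have -> : u ^+ 2 * ((A + B) * s)^-1 + v ^+ 2 * ((B + A) * s^-1)^-1 - 2 * u * v / (A + B)
   = (u - s * v) ^+ 2 / ((A + B) * s).
  by field; rewrite !gt_eqF //; lra.
by rewrite divr_ge0 ?sqr_ge0 // mulr_ge0 // ltW //; lra.
Qed.

Lemma schur (T : finType) (P : pred T) (g : T -> nat) (N i : nat) (u : T -> R) :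
  {in P &, injective g} -> (forall x, P x -> g x < N)%N ->
  \sum_(x | P x) \sum_(y | P y)
     (if (g x <= i < g y)%N then 2 * u x * u y / (g y - g x)%:R else 0)
  <= pi * \sum_(x | P x) u x ^+ 2.
Proof.
move=> ginj gN.
pose A x : R := (i - g x)%:R + 2^-1.
pose B y : R := (g y - i.+1)%:R + 2^-1.
have A0 x : 0 < A x by rewrite /A; have := ler0n R (i - g x); lra.
have B0 y : 0 < B y by rewrite /B; have := ler0n R (g y - i.+1); lra.
have step1 x y : (if (g x <= i < g y)%N then 2 * u x * u y / (g y - g x)%:R else 0)
   <= (if (g x <= i < g y)%N then u x ^+ 2 * rterm (A x) (B y) else 0)
    + (if (g x <= i < g y)%N then u y ^+ 2 * rterm (B y) (A x) else 0).
  case: ifP => c; last by rewrite addr0.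
  have -> : (g y - g x)%:R = A x + B y :> R.
    have -> : (g y - g x = (i - g x) + (g y - i.+1) + 1)%N by lia.
    rewrite !natrD /A /B; lra.
  exact: amgm_rterm.
apply: (le_trans (ler_sum _ (fun x _ => ler_sum _ (fun y _ => step1 x y)))).
under eq_bigr do rewrite big_split /=.
rewrite big_split /=.
have part1 : \sum_(x | P x) \sum_(y | P y)
    (if (g x <= i < g y)%N then u x ^+ 2 * rterm (A x) (B y) else 0)
    <= \sum_(x | P x) (if (g x <= i)%N then pi * u x ^+ 2 else 0).
  apply: ler_sum => x Px.
  case: (leqP (g x) i) => hx /=; last by rewrite big1 // => y _.
  have -> : \sum_(y | P y) (if (i < g y)%N then u x ^+ 2 * rterm (A x) (B y) else 0)
      = u x ^+ 2 * \sum_(y | P y && (i < g y)%N) rterm (A x) (B y).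
    by rewrite mulr_sumr big_mkcondr /=; apply: eq_bigr => y _; case: ifP; rewrite ?mulr0.
  rewrite mulrC; apply: ler_wpM2r; first exact: sqr_ge0.
  apply: le_trans (row_bound N.+1 (A0 x)).
  have := @reindex_le T [pred y | P y && (i < g y)%N] (fun y => g y - i.+1)%N N
     (fun n => rterm (A x) (n%:R + 2^-1)).
  apply.
  - move=> y1 y2; rewrite !inE => /andP[P1 i1] /andP[P2 i2] e.
    by apply: ginj => //; lia.
  - by move=> y /andP[Py _]; have := gN y Py; lia.
  - by move=> n; apply: rterm_ge0 => //; have := ler0n R n; lra.
have part2 : \sum_(x | P x) \sum_(y | P y)
    (if (g x <= i < g y)%N then u y ^+ 2 * rterm (B y) (A x) else 0)
    <= \sum_(y | P y) (if (i < g y)%N then pi * u y ^+ 2 else 0).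
  rewrite exchange_big /=.
  apply: ler_sum => y Py.
  case: (ltnP i (g y)) => hy /=; last first.
    by rewrite big1 // => x _; rewrite andbF.
  have -> : \sum_(x | P x) (if (g x <= i)%N && true then u y ^+ 2 * rterm (B y) (A x) else 0)
      = u y ^+ 2 * \sum_(x | P x && (g x <= i)%N) rterm (B y) (A x).
    rewrite mulr_sumr big_mkcondr /=; apply: eq_bigr => x _.
    by rewrite andbT; case: ifP; rewrite ?mulr0.
  rewrite mulrC; apply: ler_wpM2r; first exact: sqr_ge0.
  apply: le_trans (row_bound i.+1 (B0 y)).
  have := @reindex_le T [pred x | P x && (g x <= i)%N] (fun x => i - g x)%N i
     (fun n => rterm (B y) (n%:R + 2^-1)).
  apply.
  - move=> x1 x2; rewrite !inE => /andP[P1 i1] /andP[P2 i2] e.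
    by apply: ginj => //; lia.
  - by move=> x /andP[Px _]; lia.
  - by move=> n; apply: rterm_ge0 => //; have := ler0n R n; lra.
apply: le_trans (lerD part1 part2) _.
rewrite -big_split /= mulr_sumr; apply: ler_sum => x _.
by case: (leqP (g x) i) => hx; rewrite ?addr0 ?add0r.
Qed.
End Schur.

Section SProps.
Variable N : nat.
Hypothesis N0 : (0 < N)%N.
Implicit Types x y : {ffun 'I_N -> bool}.

Lemma inS_has x : inS x -> has (fun i : 'I_N => x i) (enum 'I_N).
Proof.
case/andP=> _ /forallP hl.
have hN : (N.-1 < N)%N by rewrite ltn_predL.
have := hl (Ordinal hN); rewrite eqxx /= => xl.
apply/hasP; exists (Ordinal hN) => //; exact: mem_enum.
Qed.

Lemma f_lt x : inS x -> (f x < N)%N.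
Proof.
move=> hx; rewrite /f -[X in (_ < X)%N](size_enum_ord N) -has_find.
exact: inS_has.
Qed.

Lemma inS_val x : inS x -> forall k : 'I_N, x k = (f x <= k)%N.
Proof.
move=> hx k; have fl := f_lt hx.
have hh := inS_has hx.
case/andP: hx => /forallP hm _.
case: (leqP (f x) k) => h.
  have := nth_find k hh; rewrite -/(f x) => xf.
  have := hm (nth k (enum 'I_N) (f x)) => /forallP /(_ k) /implyP.
  rewrite nth_enum_ord // => /(_ h) /implyP; exact.
have := before_find k h.
have -> : nth k (enum 'I_N) k = k.
  by apply: val_inj; rewrite /= nth_enum_ord.
by [].
Qed.

Lemma f_inj : {in [pred x | @inS N x] &, injective (@f N)}.
Proof.
move=> x y hx hy e; apply/ffunP => k.
by rewrite (inS_val hx) (inS_val hy) e.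
Qed.

Lemma bit_inS x (i : nat) : inS x -> bit x i = (f x <= i)%N && (i < N)%N.
Proof.
move=> hx; rewrite /bit.
case: insubP => [k hk vk|hk] /=.
  by rewrite (inS_val hx) vk hk andbT.
by rewrite (negbTE hk) andbF.
Qed.
End SProps.

Section Main.
Variable R : realType.

Lemma sqmodN (c : R[i]) : sqmod (- c) = sqmod c.
Proof. by case: c => a b; rewrite /sqmod /= !sqrrN. Qed.

Lemma normsq_oracle N (x : {ffun 'I_N -> bool}) (v : state R) :
  normsq (oracle x v) = normsq v.
Proof.
apply: eq_esum => p _; rewrite /oracle; by case: (bit x p.2); rewrite ?sqmodN.
Qed.

Lemma normsq_ket0 : normsq (ket0 R) = 1%E.
Proof.
rewrite /normsq.
have -> : (fun p => (sqmod (ket0 R p))%:E) = (fun p => if p \in [set (0%N, 0%N)] then 1%E else 0%E).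
  apply/funext => p; rewrite /ket0; case: (eqVneq p (0%N, 0%N)) => [->|np].
    by rewrite mem_set // sqmod1.
  rewrite memNset; last by move=> /= e; move/eqP: np; apply.
  by rewrite /sqmod /= expr0n /= addr0.
by rewrite -esum_mkcond esum_set1.
Qed.

Lemma psi_norm (U : state R -> state R) N (x : {ffun 'I_N -> bool}) j :
  unitary U -> normsq (psi U x j) = 1%E.
Proof.
move=> hU; have [hl2 _ hnorm _] := hU.
elim: j => [|j IH].
  by rewrite /psi /= hnorm ?normsq_ket0 // /l2 normsq_ket0 ltry.
have -> : psi U x j.+1 = U (oracle x (psi U x j)) by [].
by rewrite hnorm ?normsq_oracle // /l2 normsq_oracle IH ltry.
Qed.

Lemma psi_l2 (U : state R -> state R) N (x : {ffun 'I_N -> bool}) j :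
  unitary U -> l2 (psi U x j).
Proof. by move=> hU; rewrite /l2 psi_norm // ltry. Qed.

Lemma l2_oracle N (x : {ffun 'I_N -> bool}) (v : state R) : l2 v -> l2 (oracle x v).
Proof. by rewrite /l2 normsq_oracle. Qed.

Lemma conjN (a : R[i]) : conjc (- a) = - conjc a.
Proof. by case: a. Qed.

Lemma nrm2 (z : R[i]) : nrm (z + z) = 2 * nrm z.
Proof.
have := normrMn z 2; rewrite !normE -rmorphMn => /complexI.
by rewrite mulr2n => ->; rewrite mulr2n mulrDl mul1r.
Qed.

Lemma nrm0 : nrm (0 : R[i]) = 0.
Proof. by rewrite /nrm /sqmod /= expr0n /= addr0 sqrtr0. Qed.

Lemma D_nrm (a b : R[i]) (bx byy : bool) :
  nrm (conjc a * b - conjc (if bx then - a else a) * (if byy then - b else b))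
  = if bx == byy then 0 else 2 * (nrm a * nrm b).
Proof.
case: bx; case: byy => /=;
  rewrite ?conjN ?mulNr ?mulrN ?opprK ?subrr ?nrm0 //;
  by rewrite nrm2 nrmM nrm_conj.
Qed.

Lemma card_S N : (0 < N)%N -> \sum_(x : {ffun 'I_N -> bool} | inS x) (1 : R) <= N%:R.
Proof.
move=> N0.
have := @reindex_le R _ (fun x : {ffun 'I_N -> bool} => inS x) (@f N) N.-1 (fun _ => 1).
rewrite prednK //; move=> h; apply: le_trans (h _ _ _) _.
- exact: f_inj.
- by move=> x hx; rewrite -ltnS prednK // f_lt.
- by move=> _; exact: ler01.
by rewrite sumr_const card_ord.
Qed.

Lemma term_le N (N0 : (0 < N)%N) (x y : {ffun 'I_N -> bool}) (hx : inS x) (hy : inS y)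
  (i : nat) (a b : R[i]) :
  `|omega R x y| * nrm (conjc a * b - conjc (if bit x i then - a else a) * (if bit y i then - b else b))
  <= if (f x <= i < f y)%N then 2 * nrm a * nrm b / (f y - f x)%:R else 0.
Proof.
rewrite D_nrm (bit_inS N0 i hx) (bit_inS N0 i hy) /omega.
have fxN := f_lt N0 hx; have fyN := f_lt N0 hy.
have rge0 : 0 <= if (f x <= i < f y)%N then 2 * nrm a * nrm b / (f y - f x)%:R else 0.
  case: ifP => _ //; apply: divr_ge0 => //; apply: mulr_ge0; [apply: mulr_ge0 => //|];
  exact: nrm_ge0.
case: ifP => hw; last by rewrite normr0 mul0r.
have ebits : (((f x <= i) && (i < N)) == ((f y <= i) && (i < N)))%N = ~~ (f x <= i < f y)%N.
  move/andP: hw => [h1 h2].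
  by case: (leqP (f x) i) => ?; case: (leqP (f y) i) => ?; case: (ltnP i N) => ? //=; lia.
rewrite ebits; case: (boolP (f x <= i < f y)%N) => hc /=; last by rewrite mulr0.
rewrite ger0_norm ?invr_ge0 // mulrC.
by rewrite mulrA.
Qed.
End Main.

Lemma innerE (R : realType) (v w : state R) : inner v w = csum (fun p => conjc (v p) * w p).
Proof. by []. Qed.

Unset Implicit Arguments.
Local Close Scope classical_set_scope.
Local Open Scope ring_scope.

Theorem lemma4 (R : realType) (N T : nat) (U : state R -> state R)
  (hN : (2 <= N)%N) (hT : (1 <= T)%N) (hU : unitary U)
  (j : nat) (hj : (j < T)%N) :
  `| W N U j - W N U j.+1 | <= ((pi : R) * N%:R)%:C%C.
Proof.
have N0 : (0 < N)%N by lia.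
pose u (x : {ffun 'I_N -> bool}) := psi U x j.
have lu : forall x : {ffun 'I_N -> bool}, l2 (u x) by move=> x; exact: psi_l2.
have lo : forall x, l2 (oracle x (u x)) by move=> x; exact: l2_oracle.
pose D (x y : {ffun 'I_N -> bool}) (p : nat * nat) :=
  conjc (u x p) * u y p - conjc (oracle x (u x) p) * oracle y (u y) p.
have cD x y : csumm (D x y).
  by apply: csummD; [exact: csumm_inner | apply: csummN; exact: csumm_inner].
pose E p := \sum_(x | inS x) \sum_(y | inS y) (omega R x y)%:C%C * D x y p.
have cE : csumm E.
  by apply: csumm_sum => x _; apply: csumm_sum => y _; exact: csummZ.
have eW : W N U j - W N U j.+1 = csum E.
  rewrite /E csum_sum; last by move=> x _; apply: csumm_sum => y _; exact: csummZ.
  rewrite /W -sumrB; apply: eq_bigr => x _.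
  rewrite csum_sum; last by move=> y _; exact: csummZ.
  rewrite -sumrB; apply: eq_bigr => y _.
  rewrite csumZ // /D csumB; [|exact: csumm_inner|exact: csumm_inner].
  have -> : psi U x j.+1 = U (oracle x (u x)) by [].
  have -> : psi U y j.+1 = U (oracle y (u y)) by [].
  by rewrite !inner_U // mulrBr.
have pt p : nrm (E p) <= pi * \sum_(x | inS x) sqmod (u x p).
  apply: le_trans (nrm_sum _ _ _) _.
  apply: le_trans (ler_sum _ (fun x _ => nrm_sum _ _ _)) _.
  have step : \sum_(x | inS x) \sum_(y | inS y) nrm ((omega R x y)%:C%C * D x y p)
     <= \sum_(x | inS x) \sum_(y | inS y)
          (if (f x <= p.2 < f y)%N then 2 * nrm (u x p) * nrm (u y p) / (f y - f x)%:R else 0).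
    apply: ler_sum => x hx; apply: ler_sum => y hy.
    rewrite nrmM nrm_real /D /oracle; exact: term_le.
  apply: le_trans step _.
  have := @schur R _ (fun x => inS x) (@f N) N p.2 (fun x => nrm (u x p)) (f_inj N0)
    (fun x hx => f_lt N0 hx).
  move=> h; apply: le_trans h _.
  by under eq_bigr do rewrite nrm_sqr.
have sH : summ (fun p => pi * \sum_(x | inS x) sqmod (u x p)).
  apply: summZ; apply: summ_sum => x _; apply/l2_summ; exact: lu.
have le1 : sumR (fun p => nrm (E p)) <= sumR (fun p => pi * \sum_(x | inS x) sqmod (u x p)).
  exact: sumR_le cE sH pt.
rewrite (sumR_Z _ (summ_sum _ (fun x _ => (proj1 (l2_summ _)) (lu x)))) in le1.
rewrite sumR_sum in le1; last by move=> x _; apply/l2_summ; exact: lu.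
rewrite (eq_bigr (fun _ => 1)) in le1; last first.
  by move=> x _; rewrite sumR_sqmod /u psi_norm.
rewrite eW; apply: le_trans (csum_norm cE) _; rewrite lecR.
apply: le_trans le1 _; apply: ler_wpM2l; [exact: pi_ge0 | exact: card_S].
Qed.
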